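(* (1) Two distinct seeds $\phi,\psi$ are neighbors if and only if $parent(\psi)=\phi$ or $parent(\phi)=\psi$. (2) If $\phi=parent(\psi)$, then $perms(\phi)\cap perms(\psi)=cycle(\widetilde\psi)$, and there is $i\in\{1,\dots,n-3\}$ with $\psi=son(\phi,i)$ (i.e. $\sigma^i(\phi^{(i)})=\widetilde\psi$); if moreover $height(\phi)=k<n-3$ then $height(\psi)=\Delta(k,i)$. (3) For every seed $\phi$ with $height(\phi)>1$ and every $i\in\{1,\dots,n-3\}$ there exists a seed $\beta$ with $son(\phi,i)=\beta$.
   Context: Fix an integer $n\ge 5$. An $n$-permutation is a sequence $(a_1,\dots,a_n)$ of the distinct elements of $\{1,\dots,n\}$. For $\pi=(a_1,\dots,a_n)$ put $\sigma(\pi)=(a_2,\dots,a_n,a_1)$ and $\tau(\pi)=(a_2,a_1,a_3,\dots,a_n)$; $cycle(\pi)$ denotes the set of the $n$ cyclic rotations of $\pi$; $\sigma^i$ is $\sigma$ applied $i$ times. On $\{1,\dots,n-1\}$ let $a\oplus 1=a+1$ for $a<n-1$ and $(n-1)\oplus 1=1$; $a\ominus 1$ is the unique $b$ with $b\oplus 1=a$, and $a\oplus j$, $a\ominus j$ denote $j$-fold iterates. A seed is an $(n-1)$-tuple $\psi=(a_1,\dots,a_{n-1})$ of distinct elements of $\{1,\dots,n\}$ with $a_1=n$ and $a_2\oplus1\notin\{a_1,\dots,a_{n-1}\}$; its missing element is $mis(\psi)=a_2\oplus 1$. The package $perms(\psi)$ is the set of all $n$-permutations obtained from $\psi$ by inserting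 $mis(\psi)$ at any position and then applying any cyclic rotation. Seeds $\phi,\psi$ are neighbors if $perms(\phi)\cap perms(\psi)\neq\emptyset$. For a seed $\psi=(a_1,\dots,a_{n-1})$ with $x=mis(\psi)$: $height(\psi)$ is the largest $k\in\{1,\dots,n-2\}$ such that $a_i=a_{i+1}\oplus 1$ for all $2\le i\le k$; $\widetilde\psi=(a_1,x,a_2,\dots,a_{n-1})$; and for $1\le i\le n-1$, $\psi^{(i)}=(x,c_1,\dots,c_{n-1})$ where $(c_1,\dots,c_{n-1})$ is $\psi$ cyclically rotated to the right by $i-1$ positions (so $\psi^{(1)}=(x,a_1,\dots,a_{n-1})$ and $\psi^{(n-1)}=(x,a_2,\dots,a_{n-1},a_1)$). For distinct neighboring seeds $\beta,\psi$ we write $parent(\beta)=\psi$ if $height(\psi)>1$ and $mis(\psi)=mis(\beta)\oplus 1$; if moreover $\sigma^i(\psi^{(i)})=\widetilde\beta$ we write $son(\psi,i)=\beta$ ($\beta$ is the $i$-th son of $\psi$). $\Delta(k,i)=\min(k-1,n-2-i)$. *)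

(* Defs.v *)
From mathcomp Require Import all_boot.
Set Implicit Arguments. Unset Strict Implicit. Unset Printing Implicit Defensive.

(* a (+) 1 on {1,...,n-1} *)
Definition succm (n a : nat) : nat := if a < n.-1 then a.+1 else 1.

Definition sigma (p : seq nat) : seq nat := rot 1 p.

Definition in_cycle (n : nat) (pi p : seq nat) : Prop :=
  exists2 k, k < n & p = rot k pi.

(* psi = (a_1,...,a_{n-1}) ; a_i is nth 0 psi (i-1) *)
Definition mis (n : nat) (psi : seq nat) : nat := succm n (nth 0 psi 1).

Definition is_seed (n : nat) (psi : seq nat) : bool :=
  [&& size psi == n.-1, uniq psi, all (fun a => (1 <= a) && (a <= n)) psi,
      nth 0 psi 0 == n & mis n psi \notin psi].

Definition in_perms (n : nat) (psi p : seq nat) : Prop :=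
  exists j k, [/\ j <= n.-1, k < n &
    p = rot k (take j psi ++ mis n psi :: drop j psi)].

Definition neighbors (n : nat) (phi psi : seq nat) : Prop :=
  exists p, in_perms n phi p /\ in_perms n psi p.

(* a_i = a_{i+1} (+) 1 for all 2 <= i <= k *)
Definition hcond (n : nat) (psi : seq nat) (k : nat) : bool :=
  [forall i : 'I_n, ((2 <= i) && (i <= k)) ==>
      (nth 0 psi i.-1 == succm n (nth 0 psi i))].

Definition height (n : nat) (psi : seq nat) : nat :=
  \max_(k < n.-1 | (1 <= k) && hcond n psi k) k.

Definition tilde (n : nat) (psi : seq nat) : seq nat :=
  nth 0 psi 0 :: mis n psi :: behead psi.

Definition sup (n : nat) (psi : seq nat) (i : nat) : seq nat :=
  mis n psi :: rotr i.-1 psi.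

(* parent(beta) = psi *)
Definition parent_of (n : nat) (beta psi : seq nat) : Prop :=
  [/\ is_seed n beta, is_seed n psi, beta <> psi, neighbors n beta psi &
      (1 < height n psi /\ mis n psi = succm n (mis n beta))].

Definition son_of (n : nat) (psi : seq nat) (i : nat) (beta : seq nat) : Prop :=
  parent_of n beta psi /\ iter i sigma (sup n psi i) = tilde n beta.

Definition Delta (n k i : nat) : nat := minn (k - 1) (n - 2 - i).

(* Main.v *)
Require Import Defs.
From mathcomp Require Import all_boot zify.
Set Implicit Arguments. Unset Strict Implicit. Unset Printing Implicit Defensive.

Lemma succm_mod n a : 1 < n -> a <= n.-1 -> succm n a = (a %% n.-1).+1.
Proof.
move=> hn ha; rewrite /succm; case: ltnP => h.
  by rewrite modn_small.
have -> : a = n.-1 by apply/eqP; rewrite eqn_leq ha h.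
by rewrite modnn.
Qed.

Lemma succm_range n a : 1 < n -> 0 < succm n a <= n.-1.
Proof. by move=> hn; rewrite /succm; case: (ltnP a n.-1) => h /=; lia. Qed.

Lemma iter_succm n a j : 1 < n -> a <= n.-1 -> 0 < j ->
  iter j (succm n) a = ((a + j.-1) %% n.-1).+1.
Proof.
move=> hn ha; elim: j => // j IH _.
case: j IH => [|j] IH; first by rewrite /= addn0 succm_mod.
rewrite iterS IH // succm_mod //; last first.
  have : ((a + j) %% n.-1) < n.-1 by rewrite ltn_mod; lia.
  by simpl; lia.
by congr S; rewrite /= -addn1 modnDml; congr (_ %% _); lia.
Qed.

Lemma iter_succm_neq n a j : 1 < n -> 0 < a <= n.-1 -> 0 < j < n.-1 ->
  iter j (succm n) a != a.
Proof.
move=> hn /andP[a0 ha] /andP[j0 jn]; rewrite iter_succm //.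
apply/eqP => E.
have : (a.-1 + j) %% n.-1 = a.-1 %% n.-1.
  have -> : a.-1 + j = a + j.-1 by lia.
  rewrite [a.-1 %% _]modn_small; last by lia. by rewrite -[in RHS]E.
move/eqP; rewrite -[X in _ == X %[mod _]]addn0 eqn_modDl mod0n modn_small //; lia.
Qed.

Lemma succm_neq n a : 4 < n -> 0 < a <= n.-1 -> succm n a != a.
Proof. move=> hn ha; apply: (@iter_succm_neq n a 1) => //; lia. Qed.

Lemma succm2_neq n a : 4 < n -> 0 < a <= n.-1 -> succm n (succm n a) != a.
Proof. move=> hn ha; apply: (@iter_succm_neq n a 2) => //; lia. Qed.

Definition ins n (psi : seq nat) j := take j psi ++ mis n psi :: drop j psi.

Section SeedFacts.
Lemma seed_size n psi : is_seed n psi -> size psi = n.-1.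
Proof. by case/and5P => /eqP. Qed.
Lemma seed_uniq n psi : is_seed n psi -> uniq psi.
Proof. by case/and5P. Qed.
Lemma seed_head n psi : is_seed n psi -> nth 0 psi 0 = n.
Proof. by case/and5P => _ _ _ /eqP. Qed.
Lemma seed_mis n psi : is_seed n psi -> mis n psi \notin psi.
Proof. by case/and5P. Qed.
Lemma seed_mem n psi x : is_seed n psi -> x \in psi -> 0 < x <= n.
Proof. by case/and5P => _ _ /allP H _ _ /H. Qed.
Lemma seed_nth n psi m : 1 < n -> is_seed n psi -> 0 < m < n.-1 -> 0 < nth 0 psi m <= n.-1.
Proof.
move=> hn hs /andP[m0 mn].
have hsz := seed_size hs.
have : nth 0 psi m \in psi by apply: mem_nth; rewrite hsz.
move/(seed_mem hs) => /andP[h1 h2]; rewrite h1 /=.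
have : nth 0 psi m != nth 0 psi 0.
  by rewrite nth_uniq ?hsz ?(seed_uniq hs) //; lia.
rewrite (seed_head hs); lia.
Qed.
Lemma seed_shape n psi : 1 < n -> is_seed n psi -> psi = n :: behead psi.
Proof.
move=> hn hs; have := seed_head hs; have := seed_size hs.
case: psi {hs} => [|a s] /= hsz; [lia | by move=> ->].
Qed.
Lemma mis_range n psi : 1 < n -> 0 < mis n psi <= n.-1.
Proof. exact: succm_range. Qed.
End SeedFacts.

Lemma perm_ins n psi j : perm_eq (ins n psi j) (mis n psi :: psi).
Proof.
rewrite /ins -cat1s perm_catCA /= cat_take_drop //.
Qed.

Lemma size_ins n psi j : size (ins n psi j) = (size psi).+1.
Proof. by rewrite (perm_size (perm_ins n psi j)). Qed.

Lemma uniq_ins n psi j : is_seed n psi -> uniq (ins n psi j).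
Proof.
move=> hs; rewrite (perm_uniq (perm_ins n psi j)) /= (seed_mis hs) (seed_uniq hs) //.
Qed.

Lemma nth_ins n psi j m : j <= size psi ->
  nth 0 (ins n psi j) m =
  if m < j then nth 0 psi m else if m == j then mis n psi else nth 0 psi m.-1.
Proof.
move=> hj; rewrite /ins nth_cat size_take.
have -> : (if j < size psi then j else size psi) = j.
  by case: ltnP => // h; apply/eqP; rewrite eqn_leq hj h.
case: ltnP => h1; first by rewrite nth_take.
case: eqP => [->|h2]; first by rewrite subnn.
have -> : m - j = (m - j).-1.+1 by lia.
by rewrite /= nth_drop; congr nth; lia.
Qed.

Lemma perms_norm n psi p : 1 < n -> is_seed n psi -> in_perms n psi p ->
  exists j k, [/\ 0 < j <= n.-1, k < n & p = rot k (ins n psi j)].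
Proof.
move=> hn hs [j [k [hj hk ->]]].
have hsz := seed_size hs.
case: (posnP j) => [j0|jpos]; last first.
  by exists j, k; split => //; rewrite jpos.
subst j.
have E : take 0 psi ++ mis n psi :: drop 0 psi = rotr 1 (ins n psi n.-1).
  by rewrite /ins -hsz take_size drop_size take0 drop0 cats1 rotr1_rcons.
have szt : size (ins n psi n.-1) = n by rewrite size_ins hsz; lia.
rewrite E; exists n.-1.
case: (posnP k) => [->|kpos].
  exists n.-1; split => //; try lia.
  by rewrite rot0 /rotr szt subn1.
exists k.-1; split => //; try lia.
rewrite -{1}(prednK kpos) -addn1 rotD; last by rewrite size_rotr szt; lia.
by rewrite rotrK.
Qed.

Lemma rot_cancel (L1 L2 : seq nat) k1 k2 :
  uniq L1 -> size L1 = size L2 -> nth 0 L1 0 = nth 0 L2 0 ->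
  k1 < size L1 -> k2 < size L1 -> rot k1 L1 = rot k2 L2 -> L1 = L2.
Proof.
wlog le12 : L1 L2 k1 k2 / k1 <= k2.
  move=> W u sz h0 hk1 hk2 E; case: (leqP k1 k2) => h; first exact: (W L1 L2 k1 k2 h u sz h0 hk1 hk2 E).
  have u2 : uniq L2 by rewrite -(rot_uniq k2) -E rot_uniq.
  symmetry; apply: (W L2 L1 k2 k1) => //; try lia; by rewrite ?sz ?h0 ?E.
move=> u sz h0 hk1 hk2 E.
have E2 : rot k1 L1 = rot k1 (rot (k2 - k1) L2).
  by rewrite E -rotD ?subnKC // -sz; lia.
move/rot_inj: E2 => E2.
have u2 : uniq L2 by rewrite -(rot_uniq (k2 - k1)) -E2.
have hd : nth 0 L2 (k2 - k1) = nth 0 L2 0.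
  rewrite -h0 E2 /rot nth_cat size_drop.
  case: ifP => h; first by rewrite nth_drop addn0.
  exfalso; move: h; rewrite -sz; lia.
move/eqP: hd; rewrite nth_uniq // -?sz; try lia.
by move/eqP=> d0; rewrite E2 d0 rot0.
Qed.

Lemma head_ins n psi j : 0 < j -> j <= size psi -> nth 0 (ins n psi j) 0 = nth 0 psi 0.
Proof. by move=> j0 hj; rewrite nth_ins // j0. Qed.

Lemma common_p n phi psi p : 1 < n -> is_seed n phi -> is_seed n psi ->
  in_perms n phi p -> in_perms n psi p ->
  exists j1 j2 k, [/\ 0 < j1 <= n.-1, 0 < j2 <= n.-1, k < n,
     p = rot k (ins n phi j1) & ins n phi j1 = ins n psi j2].
Proof.
move=> hn h1 h2 /(perms_norm hn h1) [j1 [k1 [hj1 hk1 E1]]]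
  /(perms_norm hn h2) [j2 [k2 [hj2 hk2 E2]]].
exists j1, j2, k1; split => //.
have sz1 := seed_size h1; have sz2 := seed_size h2.
apply: (rot_cancel (k1 := k1) (k2 := k2)).
- exact: uniq_ins.
- by rewrite !size_ins sz1 sz2.
- rewrite !head_ins ?sz1 ?sz2 ?(seed_head h1) ?(seed_head h2) //; lia.
- rewrite size_ins sz1; lia.
- rewrite size_ins sz1; lia.
- by rewrite -E1 -E2.
Qed.

Lemma common n phi psi : 1 < n -> is_seed n phi -> is_seed n psi ->
  neighbors n phi psi ->
  exists j1 j2, [/\ 0 < j1 <= n.-1, 0 < j2 <= n.-1 & ins n phi j1 = ins n psi j2].
Proof.
move=> hn h1 h2 [p [p1 p2]].
have [j1 [j2 [k [? ? ? ? ?]]]] := common_p hn h1 h2 p1 p2.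
by exists j1, j2.
Qed.

Lemma neighbors_sym n phi psi : neighbors n phi psi -> neighbors n psi phi.
Proof. by move=> [p [? ?]]; exists p. Qed.

Lemma filter_ins n s j : is_seed n s -> filter (predC1 (mis n s)) (ins n s j) = s.
Proof.
move=> hs; rewrite /ins filter_cat /= eqxx /= -filter_cat cat_take_drop.
apply/all_filterP; apply/allP => y hy /=; apply/eqP => E.
by move: (seed_mis hs); rewrite -E hy.
Qed.

Lemma same_mis n phi psi j1 j2 : is_seed n phi -> is_seed n psi ->
  ins n phi j1 = ins n psi j2 -> mis n phi = mis n psi -> phi = psi.
Proof.
move=> h1 h2 E M.
by rewrite -(filter_ins j1 h1) -(filter_ins j2 h2) E M.
Qed.

Lemma child_lemma n phi psi j2 : 4 < n -> is_seed n phi -> is_seed n psi ->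
  1 < j2 <= n.-1 -> ins n phi 1 = ins n psi j2 ->
  [/\ 2 < j2, mis n psi = succm n (mis n phi) & nth 0 psi 1 = succm n (nth 0 psi 2)].
Proof.
move=> hn h1 h2 /andP[j2a j2b] E.
have sz1 := seed_size h1; have sz2 := seed_size h2.
have e1 : nth 0 (ins n phi 1) 1 = nth 0 (ins n psi j2) 1 by rewrite E.
rewrite !nth_ins ?sz1 ?sz2 /= ?j2a in e1; try lia.
have e2 : nth 0 (ins n phi 1) 2 = nth 0 (ins n psi j2) 2 by rewrite E.
rewrite !nth_ins ?sz1 ?sz2 /= in e2; try lia.
have M : mis n psi = succm n (mis n phi) by rewrite /mis -e1.
have r1 : 0 < nth 0 phi 1 <= n.-1 by apply: seed_nth => //; lia.
case: (ltngtP j2 2) e2 => hj e2; first lia.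
  split => //; by rewrite -e1 -e2.
exfalso; move: e2; rewrite M /mis => e2.
by move: (succm2_neq hn r1); rewrite -e2 eqxx.
Qed.

Lemma hcondP n psi k : k < n ->
  reflect (forall m, 2 <= m <= k -> nth 0 psi m.-1 = succm n (nth 0 psi m))
          (hcond n psi k).
Proof.
move=> hk; apply: (iffP forallP) => H.
  move=> m hm; have hmn : m < n by lia.
  by move: (H (Ordinal hmn)) => /= /implyP /(_ hm) /eqP.
by move=> i; apply/implyP => hi; apply/eqP; apply: H.
Qed.

Lemma height_ge n psi h : 0 < h < n.-1 -> hcond n psi h -> h <= height n psi.
Proof.
move=> /andP[h0 hn] hc.
rewrite /height; apply: (@leq_bigmax_cond _ _ (fun k : 'I_n.-1 => val k) (Ordinal hn)).
by rewrite /= h0.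
Qed.

Lemma height_lt n psi h : 0 < h < n -> ~~ hcond n psi h -> height n psi < h.
Proof.
move=> /andP[h0 hn] hc.
have : height n psi <= h.-1; last lia.
apply/bigmax_leqP => k /andP[k1 hk].
case: (ltnP k h) => hkh; first lia.
exfalso; move/negP: hc; apply.
have kn : k < n by have := ltn_ord k; lia.
apply/hcondP => // m hm; move/hcondP: hk => /(_ kn); apply; lia.
Qed.

Lemma height_le n psi : height n psi <= n.-2.
Proof.
apply/bigmax_leqP => k _; have := ltn_ord k; lia.
Qed.

Lemma height_eq n psi h : 0 < h < n.-1 -> hcond n psi h ->
  (h.+1 < n.-1 -> ~~ hcond n psi h.+1) -> height n psi = h.
Proof.
move=> hh hc hn1; apply/eqP; rewrite eqn_leq height_ge // andbT.
case: (ltnP h.+1 n.-1) => H.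
  have := height_lt (h := h.+1) (psi := psi) (n := n); rewrite ltnS; apply; last exact: hn1.
  lia.
have := height_le n psi; lia.
Qed.

Lemma height_spec n psi : 2 < n ->
  [/\ 0 < height n psi, hcond n psi (height n psi) &
      ((height n psi).+1 < n.-1 -> ~~ hcond n psi (height n psi).+1)].
Proof.
move=> hn.
have h1 : 0 < height n psi.
  apply: (leq_trans _ (height_ge (h := 1) _ _)); first by [].
    lia.
  by apply/hcondP => //; lia.
have hl := height_le n psi.
split => //.
  case hc: (hcond n psi (height n psi)) => //.
  have := @height_lt n psi (height n psi); rewrite ltnn hc; apply => //; lia.
move=> hlt; case hc: (hcond n psi (height n psi).+1) => //.
have := @height_ge n psi (height n psi).+1; rewrite ltnn hc; apply => //; lia.
Qed.

Lemma height_gt1 n psi : 3 < n ->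
  (1 < height n psi <-> nth 0 psi 1 = succm n (nth 0 psi 2)).
Proof.
move=> hn; split => H.
  have [h0 hc _] := height_spec psi (ltnW hn).
  move/hcondP: hc => /(_ ltac:(have := height_le n psi; lia)) /(_ 2); apply; lia.
apply: (height_ge (h := 2)); first lia.
apply/hcondP; first lia.
move=> m hm; have -> : m = 2 by lia.
exact: H.
Qed.

Lemma ins1_tilde n psi : 0 < size psi -> ins n psi 1 = tilde n psi.
Proof. by case: psi => [|a s] //= _; rewrite /ins /tilde /= take0 drop0. Qed.

Lemma iter_sigma i s : i <= size s -> iter i sigma s = rot i s.
Proof.
elim: i => [|i IH] hi; first by rewrite rot0.
rewrite iterS IH; last lia.
by rewrite /sigma -rotD // addn1.
Qed.

Lemma sup_rot n phi i : 0 < i <= size phi ->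
  rot i (sup n phi i) = ins n phi (size phi - i.-1).
Proof.
move=> /andP[i0 hi].
rewrite /sup.
have -> : rotr i.-1 phi = drop (size phi - i.-1) phi ++ take (size phi - i.-1) phi by [].
rewrite -cat_cons.
have Hs : size (mis n phi :: drop (size phi - i.-1) phi) = i.
  rewrite /= size_drop; lia.
by rewrite -{1}Hs rot_size_cat.
Qed.

Lemma nth_tilde n psi m : 0 < m -> nth 0 psi m = nth 0 (tilde n psi) m.+1.
Proof. by case: m => // m _; rewrite /tilde /= nth_behead. Qed.

Lemma chain_iter n phi k b : k < n -> hcond n phi k -> 0 < b <= k ->
  nth 0 phi 1 = iter b.-1 (succm n) (nth 0 phi b).
Proof.
move=> kn hc; elim: b => // b IH /andP[_ hb].
case: b IH hb => [|b] IH hb; first by [].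
rewrite IH; last lia.
move/hcondP: hc => /(_ kn) /(_ b.+2) -> /=; last lia.
by rewrite -iterSr.
Qed.

Lemma pc_struct n phi psi j1 j2 : 4 < n -> is_seed n phi -> is_seed n psi ->
  phi <> psi -> mis n phi = succm n (mis n psi) ->
  0 < j1 <= n.-1 -> 0 < j2 <= n.-1 -> ins n phi j1 = ins n psi j2 ->
  j2 = 1 /\ 2 < j1.
Proof.
move=> hn h1 h2 ne M hj1 hj2 E.
have sz1 := seed_size h1; have sz2 := seed_size h2.
have r2 : 0 < mis n psi <= n.-1 by apply: mis_range; lia.
have e1 : nth 0 (ins n phi j1) 1 = nth 0 (ins n psi j2) 1 by rewrite E.
rewrite !nth_ins ?sz1 ?sz2 in e1; try lia.
case: (eqVneq j1 1) => c1; case: (eqVneq j2 1) => c2.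
- exfalso; apply: ne; apply: (same_mis h1 h2 E).
  by move: e1; rewrite c1 c2.
- subst j1; have hj2' : 1 < j2 <= n.-1 by move/eqP: c2; lia.
  have [_ M' _] := child_lemma hn h1 h2 hj2' E.
  by move: (succm2_neq hn r2); rewrite -M -M' eqxx.
- subst j2; have hj1' : 1 < j1 <= n.-1 by move/eqP: c1; lia.
  have [? _ _] := child_lemma hn h2 h1 hj1' (esym E).
  by [].
- exfalso; apply: ne; apply: (same_mis h1 h2 E).
  move/eqP: c1 => c1; move/eqP: c2 => c2.
  move: e1; have -> : 1 < j1 by lia.
  have -> : 1 < j2 by lia.
  by rewrite /mis => ->.
Qed.

Lemma nb_cases n phi psi j1 j2 : 4 < n -> is_seed n phi -> is_seed n psi ->
  phi <> psi -> 0 < j1 <= n.-1 -> 0 < j2 <= n.-1 -> ins n phi j1 = ins n psi j2 ->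
  (j1 = 1 /\ 1 < j2 <= n.-1) \/ (j2 = 1 /\ 1 < j1 <= n.-1).
Proof.
move=> hn h1 h2 ne hj1 hj2 E.
have sz1 := seed_size h1; have sz2 := seed_size h2.
have e1 : nth 0 (ins n phi j1) 1 = nth 0 (ins n psi j2) 1 by rewrite E.
rewrite !nth_ins ?sz1 ?sz2 in e1; try lia.
case: (eqVneq j1 1) => c1; case: (eqVneq j2 1) => c2.
- exfalso; apply: ne; apply: (same_mis h1 h2 E).
  by move: e1; rewrite c1 c2.
- left; split => //; move/eqP: c2; lia.
- right; split => //; move/eqP: c1; lia.
- exfalso; apply: ne; apply: (same_mis h1 h2 E).
  move/eqP: c1 => c1; move/eqP: c2 => c2.
  move: e1; have -> : 1 < j1 by lia.
  have -> : 1 < j2 by lia.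
  by rewrite /mis => ->.
Qed.

Lemma part1 n phi psi : 4 < n -> is_seed n phi -> is_seed n psi -> phi <> psi ->
  (neighbors n phi psi <-> parent_of n psi phi \/ parent_of n phi psi).
Proof.
move=> hn h1 h2 ne; split; last first.
  by case=> [[_ _ _ H _]|[_ _ _ H _]] //; apply: neighbors_sym.
move=> nb; have [j1 [j2 [hj1 hj2 E]]] := common (ltnW (ltnW (ltnW hn))) h1 h2 nb.
case: (nb_cases hn h1 h2 ne hj1 hj2 E) => [[c1 c2]|[c2 c1]].
- subst j1; have [_ M C] := child_lemma hn h1 h2 c2 E.
  right; split => //; split => //.
  by apply/height_gt1 => //; lia.
- subst j2; have [_ M C] := child_lemma hn h2 h1 c1 (esym E).
  left; split => //; first by move=> e; apply: ne.
    exact: neighbors_sym.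
  split => //; by apply/height_gt1 => //; lia.
Qed.

Lemma part2 n phi psi : 4 < n -> parent_of n psi phi ->
     (forall p, (in_perms n phi p /\ in_perms n psi p) <-> in_cycle n (tilde n psi) p) /\
     (exists i, [/\ 1 <= i, i <= n - 3, son_of n phi i psi &
        (height n phi < n - 3 -> height n psi = Delta n (height n phi) i)]).
Proof.
move=> hn hp; case: (hp) => h2 h1 ne nb [hgt M].
have ne' : phi <> psi by move=> e; apply: ne.
have n1 : 1 < n by lia.
have sz1 := seed_size h1; have sz2 := seed_size h2.
have [j1 [j2 [hj1 hj2 E]]] := common n1 h1 h2 (neighbors_sym nb).
have [? c1] := pc_struct hn h1 h2 ne' M hj1 hj2 E; subst j2.
rewrite ins1_tilde in E; last by rewrite sz2; lia.
split.
  move=> p; split.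
    move=> [p1 p2]; have [j1' [j2' [k [hj1' hj2' hk -> E']]]] := common_p n1 h1 h2 p1 p2.
    have [? _] := pc_struct hn h1 h2 ne' M hj1' hj2' E'; subst j2'.
    by exists k; rewrite // E' ins1_tilde // sz2; lia.
  move=> [k hk ->]; split.
    by exists j1, k; split => //; [lia | rewrite -/(ins n phi j1) E].
  exists 1, k; split; [lia | done | ].
  by rewrite -ins1_tilde // sz2; lia.
exists (n - j1); split; try lia.
  split => //.
  rewrite iter_sigma; last by rewrite /sup /= size_rotr sz1; lia.
  rewrite sup_rot; last by rewrite sz1; lia.
  by rewrite sz1 (_ : n.-1 - (n - j1).-1 = j1) //; lia.
move=> hk; rewrite /Delta.
have [k0 hck nk] := height_spec phi (ltnW (ltnW hn)).
set k := height n phi in hk hgt k0 hck nk *.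
have nk' : ~~ hcond n phi k.+1 by apply: nk; lia.
have kn : k < n by lia.
have nF : forall m, 0 < m -> nth 0 psi m =
    (if m.+1 < j1 then nth 0 phi m.+1 else if m.+1 == j1 then mis n phi else nth 0 phi m).
  by move=> m m0; rewrite (nth_tilde n psi m0) -E nth_ins // sz1; lia.
have chphi : forall m, 2 <= m <= k -> nth 0 phi m.-1 = succm n (nth 0 phi m).
  by move/hcondP: hck => /(_ kn).
have hc : forall h, 0 < h -> h + 2 <= j1 -> h <= k.-1 -> hcond n psi h.
  move=> h h0 h1' h2'; apply/hcondP; first lia.
  move=> m hm; rewrite !nF; try lia.
  have -> : m.-1.+1 < j1 by lia.
  have -> : m.+1 < j1 by lia.
  rewrite (_ : m.-1.+1 = m); last lia.
  by apply: (chphi m.+1); lia.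
case: (leqP k (j1 - 2)) => cmp.
  rewrite (_ : minn (k - 1) (n - 2 - (n - j1)) = k.-1); last lia.
  apply: height_eq; try lia.
    by apply: hc; lia.
  move=> _; apply/negP => /hcondP H.
  move/negP: nk'; apply; apply/hcondP; first lia.
  move=> m hm; case: (ltnP m k.+1) => hmk; first by apply: chphi; lia.
  have -> : m = k.+1 by lia.
  have := H ltac:(lia) k ltac:(lia).
  rewrite !nF; try lia.
  have -> : k.-1.+1 < j1 by lia.
  have -> : k.+1 < j1 by lia.
  by rewrite (_ : k.-1.+1 = k) //; lia.
rewrite (_ : minn (k - 1) (n - 2 - (n - j1)) = j1 - 2); last lia.
apply: height_eq; try lia.
  by apply: hc; lia.
move=> _; apply/negP => /hcondP H.
have := H ltac:(lia) (j1 - 1) ltac:(lia).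
rewrite !nF; try lia.
have -> : (j1 - 1).-1.+1 < j1 by lia.
have -> : (j1 - 1).+1 < j1 = false by lia.
have -> : (j1 - 1).+1 == j1 by apply/eqP; lia.
rewrite (_ : (j1 - 1).-1.+1 = j1 - 1); last lia.
have ci := chain_iter kn hck (b := j1 - 1) ltac:(lia).
rewrite /mis ci => e.
have r : 0 < nth 0 phi (j1 - 1) <= n.-1 by apply: seed_nth => //; lia.
have := iter_succm_neq n1 r (j := (j1 - 1).-1.+2) ltac:(lia).
by rewrite !iterS -e eqxx.
Qed.

Lemma part3 n phi i : 4 < n -> is_seed n phi -> 1 < height n phi ->
  1 <= i -> i <= n - 3 -> exists beta, is_seed n beta /\ son_of n phi i beta.
Proof.
move=> hn h1 hgt i1 i2.
have n1 : 1 < n by lia.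
have sz1 := seed_size h1.
have ch : nth 0 phi 1 = succm n (nth 0 phi 2) by apply/height_gt1 => //; lia.
set j := n - i.
have hj : 2 < j <= n.-1 by rewrite /j; lia.
have uL := uniq_ins j h1.
have szL : size (ins n phi j) = n by rewrite size_ins sz1; lia.
have hch : nth 0 phi 1 = succm n (nth 0 phi 2) by apply: (proj1 (@height_gt1 n phi ltac:(lia))).
have e0 : nth 0 (ins n phi j) 0 = n by rewrite nth_ins ?sz1; [rewrite (_ : 0 < j) ?(seed_head h1) //|]; lia.
have e1 : nth 0 (ins n phi j) 1 = nth 0 phi 1 by rewrite nth_ins ?sz1; [rewrite (_ : 1 < j) //|]; lia.
have e2 : nth 0 (ins n phi j) 2 = nth 0 phi 2 by rewrite nth_ins ?sz1; [rewrite (_ : 2 < j) //|]; lia.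
have memL : forall y, y \in ins n phi j -> 0 < y <= n.
  move=> y; rewrite (perm_mem (perm_ins n phi j)) inE => /orP[/eqP ->|].
    have := mis_range phi n1; lia.
  exact: seed_mem h1.
have sup_eq : iter i sigma (sup n phi i) = ins n phi j.
  rewrite iter_sigma; last by rewrite /sup /= size_rotr sz1; lia.
  rewrite sup_rot; last by rewrite sz1; lia.
  by rewrite sz1 /j (_ : n.-1 - i.-1 = n - i) //; lia.
move: uL szL e0 e1 e2 memL sup_eq.
case eqL: (ins n phi j) => [|l0 [|l1 rest]] //=; try lia.
move=> /and3P[nl0 nl1 ur] szL l0n e1 e2 memL sup_eq; subst l0.
rewrite inE negb_or in nl0; case/andP: nl0 => nl01 nl0.
have mb : mis n (n :: rest) = l1 by rewrite /mis /= e2 -hch.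
have sb : is_seed n (n :: rest).
  apply/and5P; split.
  - by rewrite /=; apply/eqP; lia.
  - by rewrite /= nl0.
  - apply/allP => y; rewrite inE => /orP[/eqP ->|hy]; first by apply/andP; lia.
    by apply: memL; rewrite !inE hy !orbT.
  - by [].
  - by rewrite mb inE negb_or nl1 andbT eq_sym.
have tb : tilde n (n :: rest) = [:: n, l1 & rest] by rewrite /tilde mb.
exists (n :: rest); split => //; split => //; last by rewrite tb.
split => //.
- move=> E; move: (seed_mis sb); rewrite mb E e1 mem_nth // sz1; lia.
- exists [:: n, l1 & rest]; split.
    exists 1, 0; split; [lia | lia | ].
    by rewrite rot0 /= take0 drop0 mb.
  exists j, 0; split; [lia | lia | ].
  by rewrite rot0 -/(ins n phi j) eqL.
- by split => //; rewrite mb e1.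
Qed.

Theorem mainTheorem3 (n : nat) (hn : 5 <= n) :
  (* (1) *)
  (forall phi psi : seq nat, is_seed n phi -> is_seed n psi -> phi <> psi ->
     (neighbors n phi psi <-> parent_of n psi phi \/ parent_of n phi psi)) /\
  (* (2) *)
  (forall phi psi : seq nat, parent_of n psi phi ->
     (forall p, (in_perms n phi p /\ in_perms n psi p) <-> in_cycle n (tilde n psi) p) /\
     (exists i, [/\ 1 <= i, i <= n - 3, son_of n phi i psi &
        (height n phi < n - 3 -> height n psi = Delta n (height n phi) i)])) /\
  (* (3) *)
  (forall (phi : seq nat) (i : nat), is_seed n phi -> 1 < height n phi ->
     1 <= i -> i <= n - 3 -> exists beta, is_seed n beta /\ son_of n phi i beta).
Proof.
split; first by move=> phi psi; apply: part1.
split; first by move=> phi psi; apply: part2.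
by move=> phi i; apply: part3.
Qed.
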